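(* Let $m,n\ge1$ with $(m,n)=1$, let $d_1,\dots,d_{\tau(m)}$ and $e_1,\dots,e_{\tau(n)}$ be orderings of the positive divisors of $m$ and $n$, and order the divisors of $mn$ as $f_{\sigma(i,i')}=d_ie_{i'}$, where $\sigma(i,i')=(i-1)\tau(n)+i'$ (lexicographic order). With the matrices $M_i(N),D_i(N),W(N)$ defined as in the context (for $N=m$, $n$, $mn$ with these divisor orderings), we have, for all $1\le i,j,k\le\tau(m)$ and $1\le i',j',k'\le\tau(n)$, $$[M_{\sigma(i,i')}(mn)]_{\sigma(j,j'),\sigma(k,k')}=[M_i(m)]_{j,k}[M_{i'}(n)]_{j',k'},$$ $$[D_{\sigma(i,i')}(mn)]_{\sigma(j,j'),\sigma(k,k')}=[D_i(m)]_{j,k}[D_{i'}(n)]_{j',k'},$$ $$[W(mn)]_{\sigma(j,j'),\sigma(k,k')}=[W(m)]_{j,k}[W(n)]_{j',k'}.$$ That is, $M_{\sigma(i,i')}(mn)=M_i(m)\otimes M_{i'}(n)$, $D_{\sigma(i,i')}(mn)=D_i(m)\otimes D_{i'}(n)$, $W(mn)=W(m)\otimes W(n)$. Moreover $W(mn)=S(mn)$, where $[S(mn)]_{j,k}=c_{f_j}(mn/f_k)$.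
   Context: For integers $N\ge1$ and $x$, $c_N(x)=\sum_{1\le j\le N,\ (j,N)=1}e^{2\pi ijx/N}$ is the Ramanujan sum; $\phi$ is Euler's totient, $\tau(N)$ the number of divisors of $N$. Given an ordering $d_1,\dots,d_{\tau(N)}$ of the divisors of $N$, let $K_j=\{a\in\mathbb{Z}/N\mathbb{Z}:(a,N)=N/d_j\}$ (so $|K_j|=\phi(d_j)$). For $1\le i,j,k\le\tau(N)$, let $a_{i,j,k}(N)$ be the number of $(x,y)\in K_i\times K_j$ with $x+y=z$ in $\mathbb{Z}/N\mathbb{Z}$, for a fixed $z\in K_k$ (independent of the choice of $z$). Define $M_i(N)=(a_{i,j,k}(N))_{j,k}$, $W(N)=(w_{j,k})_{j,k}$ with $w_{j,k}=\phi(d_j)c_{d_k}(N/d_j)/\phi(d_k)$, and $D_i(N)=\operatorname{diag}(w_{i,1},\dots,w_{i,\tau(N)})$. *)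

(* Defs.v *)
From mathcomp Require Import all_boot all_order all_algebra all_field.
Set Implicit Arguments. Unset Strict Implicit. Unset Printing Implicit Defensive.
Import Order.TTheory GRing.Theory Num.Theory.
Local Open Scope ring_scope.

Definition tau (N : nat) : nat := size (divisors N).

(* ds is an ordering d_1,...,d_tau(N) of the divisors of N (0-based: d_i = nth 0 ds i) *)
Definition divisor_ordering (N : nat) (ds : seq nat) : Prop := perm_eq ds (divisors N).

(* e^{2 pi i / N} : N.-root picks the N-th root of -1 of minimal nonnegative
   argument, i.e. e^{i pi / N}; its square is e^{2 pi i / N}. *)
Definition expi (N : nat) : algC := (N.-root (-1)) ^+ 2.

Definition ramanujan (N x : nat) : algC :=
  \sum_(j < N.+1 | (0 < j)%N && coprime j N) expi N ^+ (j * x).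

(* a_{i,j,k}(N), 0-based indices into the ordering ds; the fixed z in K_k is
   taken to be N/d_k (mod N), which satisfies (z,N) = N/d_k. *)
Definition a_coef (N : nat) (ds : seq nat) (i j k : nat) : nat :=
  #|[set p : 'I_N * 'I_N |
       [&& gcdn p.1 N == N %/ nth 0 ds i,
           gcdn p.2 N == N %/ nth 0 ds j &
           (p.1 + p.2) %% N == (N %/ nth 0 ds k) %% N]%N]|.

Definition Mentry (N : nat) (ds : seq nat) (i j k : nat) : nat := a_coef N ds i j k.

Definition Wentry (N : nat) (ds : seq nat) (j k : nat) : algC :=
  (totient (nth 0 ds j))%:R * ramanujan (nth 0 ds k) (N %/ nth 0 ds j)%N
  / (totient (nth 0 ds k))%:R.

Definition Dentry (N : nat) (ds : seq nat) (i j k : nat) : algC :=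
  if j == k then Wentry N ds i j else 0.

Definition Sentry (N : nat) (fs : seq nat) (j k : nat) : algC :=
  ramanujan (nth 0 fs j) (N %/ nth 0 fs k)%N.

Definition prod_ordering (ds es : seq nat) : seq nat :=
  [seq d * e | d <- ds, e <- es]%N.

(* sigma(i,i') = i * tau(n) + i'  (0-based version of (i-1)tau(n)+i') *)
Definition sigma (taun i i' : nat) : nat := (i * taun + i')%N.

(* Main.v *)
Require Import Defs.
From mathcomp Require Import all_boot all_order all_algebra all_field.
From mathcomp Require Import ring zify.
Import Order.TTheory GRing.Theory Num.Theory.
Local Open Scope ring_scope.

Lemma max_exists (T : eqType) (s : seq T) (f : T -> algC) :
  s != [::] -> (forall x, x \in s -> f x \is Num.real) ->
  exists2 x, x \in s & forall y, y \in s -> f y <= f x.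
Proof.
elim: s => // a s IH _ Hr.
have Ha : f a \is Num.real by apply: Hr; rewrite inE eqxx.
case: s IH Hr => [|b s] IH Hr.
  by exists a; rewrite ?inE // => y; rewrite inE => /eqP->.
have [|x xs Hx] := IH isT.
  by move=> x xs; apply: Hr; rewrite inE xs orbT.
have Hxr : f x \is Num.real by apply: Hr; rewrite inE xs orbT.
have [le|lt] := real_leP Ha Hxr.
  exists x; first by rewrite inE xs orbT.
  by move=> y; rewrite inE => /predU1P[->//|/Hx].
exists a; first by rewrite inE eqxx.
move=> y; rewrite inE => /predU1P[->//|/Hx H]; exact: le_trans H (ltW lt).
Qed.

Lemma unit_norm (z : algC) n : (0 < n)%N -> z ^+ n = 1 -> `|z| = 1.
Proof.
move=> n0 zn; apply/eqP; rewrite -(pexpr_eq1 n0) ?normr_ge0 //.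
by rewrite -normrX zn normr1.
Qed.

Lemma ReIm_unit {z : algC} : `|z| = 1 -> 'Re z ^+ 2 + 'Im z ^+ 2 = 1.
Proof. by move=> h; rewrite -normC2_Re_Im h expr1n. Qed.

Lemma key_alg (p q c s : algC) :
  p ^+ 2 + q ^+ 2 = 1 -> c ^+ 2 + s ^+ 2 = 1 -> c < 1 ->
  p * c - q * s <= p -> p * c + q * s <= p -> p <= c -> False.
Proof.
move=> Hp Hc c1 H1 H2 H3.
have A0 : 0 <= p - p * c + q * s.
  by move: H1; rewrite -subr_ge0 => H; rewrite (_ : p - p * c + q * s = p - (p*c - q*s)) //; ring.
have B0 : 0 <= p - p * c - q * s.
  by move: H2; rewrite -subr_ge0 => H; rewrite (_ : p - p * c - q * s = p - (p*c + q*s)) //; ring.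
have E0 : 0 < 1 - c by rewrite subr_gt0.
have AB : (p - p * c + q * s) * (p - p * c - q * s) = (1 - c) * (2 * p ^+ 2 - 1 - c).
  have eq1 : q ^+ 2 = 1 - p ^+ 2 by rewrite -Hp; ring.
  have eq2 : s ^+ 2 = 1 - c ^+ 2 by rewrite -Hc; ring.
  transitivity ((p - p*c)^+2 - q^+2 * s^+2); first by ring.
  rewrite eq1 eq2; ring.
have F0 : 0 <= 2 * p ^+ 2 - 1 - c.
  by rewrite -(pmulr_rge0 _ E0) -AB mulr_ge0.
have P0 : 0 <= p.
  have : 0 <= (p - p * c + q * s) + (p - p * c - q * s) by rewrite addr_ge0.
  rewrite (_ : _ + _ = p * (2 * (1 - c))); last by ring.
  by rewrite pmulr_lge0 // mulr_gt0 // ltr0n.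
have C0 : 0 <= c := le_trans P0 H3.
have G0 : 0 <= (c - p) * (c + p) by rewrite mulr_ge0 ?subr_ge0 ?addr_ge0.
have : 0 <= (2 * c + 1) * (c - 1).
  have -> : (2 * c + 1) * (c - 1) = (2 * p ^+ 2 - 1 - c) + 2 * ((c - p) * (c + p)) by ring.
  by rewrite addr_ge0 // mulr_ge0 // ler0n.
rewrite pmulr_rge0; last by rewrite ltr_wpDl ?ltr01 // mulr_ge0 ?ler0n.
by rewrite subr_ge0 (lt_geF c1).
Qed.

Lemma expr_modn (y : algC) M k : y ^+ M = 1 -> y ^+ (k %% M) = y ^+ k.
Proof.
by move=> yM; rewrite {2}(divn_eq k M) exprD mulnC exprM yM expr1n mul1r.
Qed.

Lemma Re_le1 (y : algC) : `|y| = 1 -> 'Re y <= 1.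
Proof.
move=> h; rewrite -h; apply: le_trans (real_ler_norm (Creal_Re y)) _.
exact: (leif_normC_Re_Creal y).1.
Qed.

Lemma maxRe_prim M (y : algC) : (1 < M)%N -> y ^+ M = 1 -> y != 1 ->
  (forall z, z ^+ M = 1 -> z != 1 -> 'Re z <= 'Re y) -> M.-primitive_root y.
Proof.
move=> M1 yM y1 Hmax; have M0 : (0 < M)%N by apply: ltnW.
have [x xprim] := C_prim_root_exists M0.
have xM : x ^+ M = 1 := prim_expr_order xprim.
case: (boolP [exists j : 'I_M, x == y ^+ j]).
  case/existsP => j /eqP xj.
  have [mm ym mM] := prim_order_exists M0 yM.
  suff -> : M = mm by [].
  apply/eqP; rewrite eqn_dvd mM andbT (prim_order_dvd xprim).
  by rewrite xj -exprM mulnC exprM (prim_expr_order ym) expr1n.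
move/existsPn => nx.
have ne : enum 'I_M != [::] by rewrite -size_eq0 size_enum_ord -lt0n.
have [j0 _ Hj0] := @max_exists _ (enum 'I_M) (fun j => 'Re (x * y ^+ j)) ne
  (fun j _ => Creal_Re _).
have Hj : forall j : 'I_M, 'Re (x * y ^+ j) <= 'Re (x * y ^+ j0).
  by move=> j; apply: Hj0; rewrite mem_enum.
set v := x * y ^+ j0.
have ynorm : `|y| = 1 := @unit_norm y M M0 yM.
have y0 : y != 0 by rewrite -normr_eq0 ynorm oner_neq0.
have vM : v ^+ M = 1 by rewrite /v exprMn xM -exprM mulnC exprM yM expr1n mulr1.
have vne1 : v != 1.
  apply/eqP => v1; have /negP := nx (Ordinal (ltn_pmod (M - j0) M0)); apply.
  rewrite /= expr_modn //; apply/eqP.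
  have : x * y ^+ j0 * y ^+ (M - j0) = y ^+ (M - j0) by rewrite -/v v1 mul1r.
  by rewrite -mulrA -exprD subnKC ?yM ?mulr1 // ltnW.
have Hv : 'Re v <= 'Re y by apply: Hmax.
have Hvy : 'Re (v * y) <= 'Re v.
  have := Hj (Ordinal (ltn_pmod j0.+1 M0)).
  by rewrite /= expr_modn // exprS (mulrC y) mulrA.
have yc : y^* = y ^+ (M - 1).
  apply: (mulfI y0); rewrite -normCK ynorm expr1n -exprS subn1 prednK //.
have Hvy' : 'Re (v * y^*) <= 'Re v.
  have := Hj (Ordinal (ltn_pmod (j0 + (M - 1)) M0)).
  by rewrite /= expr_modn // exprD mulrA yc.
rewrite ReM in Hvy; rewrite ReM Re_conj Im_conj in Hvy'.
have vnorm : `|v| = 1 := @unit_norm v M M0 vM.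
have c1 : 'Re y < 1.
  rewrite lt_neqAle Re_le1 // andbT; apply: contra y1 => /eqP c1.
  have := ReIm_unit ynorm; rewrite c1 expr1n addrC => /(canRL (addrK 1)).
  rewrite subrr => /eqP; rewrite sqrf_eq0 => /eqP s0.
  by rewrite [y]Crect c1 s0 mulr0 addr0.
exfalso; apply: (@key_alg _ _ _ _ (ReIm_unit vnorm) (ReIm_unit ynorm) c1 _ _ Hv).
  by [].
by rewrite mulrN opprK in Hvy'.
Qed.

Lemma expi_prim N : (0 < N)%N -> N.-primitive_root (expi N).
Proof.
move=> N0; rewrite /expi; set w := N.-root (-1).
have wN : w ^+ N = -1 := rootCK N0 (-1).
have M1 : (1 < 2 * N)%N by rewrite mul2n -addnn; apply: (leq_add N0 N0).
have M0 : (0 < 2 * N)%N by apply: ltnW.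
have w2N : w ^+ (2 * N) = 1 by rewrite mulnC exprM wN sqrrN expr1n.
have n1 : (1 : algC) != -1.
  by rewrite -subr_eq0 opprK (_ : 1 + 1 = 2%:R) // pnatr_eq0.
have wne1 : w != 1 by apply: contra n1 => /eqP w1; rewrite -wN w1 expr1n.
have [x xprim] := C_prim_root_exists M0.
have ne : [seq x ^+ i | i <- iota 1 (2 * N).-1] != [::].
  by rewrite -size_eq0 size_map size_iota -lt0n -ltnS prednK.
have [y ymem Hy] := @max_exists _ _ (fun z => 'Re z) ne (fun z _ => Creal_Re _).
have Hall : forall z, z ^+ (2 * N) = 1 -> z != 1 -> 'Re z <= 'Re y.
  move=> z zM z1; apply: Hy; have [i zi] := prim_rootP xprim zM.
  apply/mapP; exists (nat_of_ord i) => //.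
  rewrite mem_iota; have := ltn_ord i; case: (nat_of_ord i) zi => [|k] zi.
    by rewrite zi expr0 eqxx in z1.
  by rewrite ltnS /= add1n -[(2 * N)%N]prednK // ltnS.
have [yM yne1] : y ^+ (2 * N) = 1 /\ y != 1.
  case/mapP: ymem => i; rewrite mem_iota => /andP [i1 i2] ->.
  split; first by rewrite -exprM mulnC exprM (prim_expr_order xprim) expr1n.
  rewrite -(prim_order_dvd xprim); apply/negP => /(dvdn_leq i1).
  have : (i < 2 * N)%N by rewrite -(prednK M0) -add1n.
  by rewrite ltnNge => /negP.
have yprim := @maxRe_prim _ _ M1 yM yne1 Hall.
have yN : y ^+ N = -1.
  have : (y ^+ N) ^+ 2 == 1 by rewrite -exprM mulnC yM.
  rewrite sqrf_eq1 => /orP [|/eqP//].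
  rewrite -(prim_order_dvd yprim) => /(dvdn_leq N0).
  by rewrite leqNgt mul2n -addnn -[X in (X < _)%N]addn0 ltn_add2l N0.
have Hyw : 'Re y <= 'Re w.
  have [Iy|Iy] := real_leP (real0 _) (Creal_Im y).
    by apply: rootC_Re_max N0 yN _.
  rewrite -Re_conj; apply: rootC_Re_max N0 _ _.
    by rewrite -rmorphXn /= yN rmorphN1.
  by rewrite Im_conj oppr_ge0 ltW.
have wprim : (2 * N).-primitive_root w.
  apply: (@maxRe_prim _ _ M1 w2N) wne1 _ => z zM z1; exact: le_trans (Hall z zM z1) Hyw.
have := dvdn_prim_root wprim (dvdn_mull 2 (dvdnn N)).
by rewrite mulnK.
Qed.


Definition rsum (z : algC) (q x : nat) : algC :=
  \sum_(j < q | coprime j q) z ^+ (j * x).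

Lemma ramanujanE q x : (0 < q)%N -> ramanujan q x = rsum (expi q) q x.
Proof.
move=> q0; rewrite /ramanujan /rsum big_mkcond big_ord_recr /=.
have zq : expi q ^+ q = 1 := prim_expr_order (@expi_prim _ q0).
have [q1|q1] := eqVneq q 1%N.
  subst q; rewrite big_ord1 /= add0r -[expi 1]expr1 zq !expr1n.
  by rewrite big_mkcond big_ord1 /= expr1n.
rewrite /coprime gcdnn (negbTE q1) andbF addr0 -big_mkcond.
apply: eq_big => [i|i _] //=; rewrite lt0n.
by case: (nat_of_ord i) => [|k] //=; rewrite gcd0n (negbTE q1).
Qed.

Lemma modMr_coprime u q a b : coprime u q ->
  (a * u == b * u %[mod q])%N = (a == b %[mod q])%N.
Proof.
move=> cu; wlog le_ab : a b / (a <= b)%N.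
  move=> H; have [?|/ltnW ?] := leqP a b; first exact: H.
  by rewrite eq_sym [X in _ = X]eq_sym H.
rewrite eq_sym [X in _ = X]eq_sym !eqn_mod_dvd ?leq_mul2r ?le_ab ?orbT //.
by rewrite -mulnBl Gauss_dvdl // coprime_sym.
Qed.

Lemma ord_mod_inj q (a b : 'I_q) : (a == b %[mod q])%N -> a = b.
Proof. by rewrite !modn_small // => /eqP/val_inj. Qed.

Lemma expr_mulC (z : algC) a b : z ^+ (a * b) = (z ^+ b) ^+ a.
Proof. by rewrite mulnC exprM. Qed.

Lemma rsum_unit z q x u : (0 < q)%N -> z ^+ q = 1 -> coprime u q ->
  rsum z q (u * x) = rsum z q x.
Proof.
move=> q0 zq cu.
pose h (j : 'I_q) : 'I_q := Ordinal (ltn_pmod (j * u) q0).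
have hinj : injective h.
  move=> i j /(congr1 val) /= /eqP; rewrite modMr_coprime // => /ord_mod_inj.
  done.
rewrite /rsum [RHS](reindex_inj hinj) /=.
apply: eq_big => [j|j _] /=; first by rewrite coprime_modl coprimeMl cu andbT.
have zxq : (z ^+ x) ^+ q = 1 by rewrite -exprM mulnC exprM zq expr1n.
by rewrite [RHS]expr_mulC expr_modn // -expr_mulC mulnA.
Qed.

Lemma rsum_prim z z' q x : q.-primitive_root z -> q.-primitive_root z' ->
  rsum z q x = rsum z' q x.
Proof.
move=> zp z'p; have q0 := prim_order_gt0 zp.
have [k zk] := prim_rootP zp (prim_expr_order z'p).
have ck : coprime k q by rewrite -(prim_root_exp_coprime _ zp) -zk.
rewrite zk -(@rsum_unit z q x k q0 (prim_expr_order zp) ck) /rsum.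
by apply: eq_bigr => j _; rewrite -exprM mulnCA.
Qed.

Lemma ramanujan_prim z q x : q.-primitive_root z -> ramanujan q x = rsum z q x.
Proof.
move=> zp; have q0 := prim_order_gt0 zp.
by rewrite ramanujanE // (@rsum_prim _ _ q x (@expi_prim _ q0) zp).
Qed.


Lemma rsum_mul d e x z : coprime d e -> (d * e).-primitive_root z ->
  rsum z (d * e) x = rsum (z ^+ e) d x * rsum (z ^+ d) e x.
Proof.
move=> cde zp; have de0 := prim_order_gt0 zp.
have d0 : (0 < d)%N by move: de0; rewrite muln_gt0 => /andP[].
have e0 : (0 < e)%N by move: de0; rewrite muln_gt0 => /andP[].
have zde : z ^+ (d * e) = 1 := prim_expr_order zp.
rewrite /rsum big_distrlr /=.
rewrite pair_big /=.
pose h (p : 'I_d * 'I_e) : 'I_(d * e) :=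
  Ordinal (ltn_pmod (e * p.1 + d * p.2) de0).
have hinj : injective h.
  move=> [a b] [a' b'] /(congr1 val) /= /eqP.
  rewrite chinese_remainder // => /andP [Hd He].
  have ha : a = a'.
    apply: ord_mod_inj; rewrite -(@modMr_coprime e d); last by rewrite coprime_sym.
    by move: Hd; rewrite !(mulnC d) !(addnC (e * _)%N) !modnMDl !(mulnC e).
  have hb : b = b'.
    apply: ord_mod_inj; rewrite -(@modMr_coprime d e) //.
    by move: He; rewrite !(mulnC e) !modnMDl !(mulnC d).
  by rewrite ha hb.
have hbij : bijective h.
  by apply: inj_card_bij hinj _; rewrite card_prod !card_ord.
rewrite (reindex h (onW_bij _ hbij)) /=.
apply: eq_big => [[a b]|[a b] _] /=.
  rewrite coprime_modl coprimeMr; congr andb.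
    rewrite -coprime_modl (mulnC d) addnC modnMDl coprime_modl coprimeMl.
    by rewrite (coprime_sym e d) cde.
  rewrite -coprime_modl (mulnC e) modnMDl coprime_modl coprimeMl.
  by rewrite cde.
have zx : (z ^+ x) ^+ (d * e) = 1 by rewrite -exprM mulnC exprM zde expr1n.
rewrite expr_mulC expr_modn // -expr_mulC mulnDl exprD -!exprM.
by rewrite !mulnA.
Qed.


Lemma lift_coprime d N a : (0 < N)%N -> coprime a d ->
  exists a', (a' == a %[mod d])%N && coprime a' N.
Proof.
move=> N0 cad.
pose pi : nat_pred := [pred p | ~~ (p %| a)%N].
pose k := (N`_pi)%N.
exists (a + d * k)%N; apply/andP; split.
  by rewrite addnC mulnC modnMDl.
have Hk : forall p, prime p -> (p %| N)%N -> (p %| k)%N = ~~ (p %| a)%N.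
  move=> p pp pN; have := pi_of_part pi N0 p.
  rewrite /pi_of /= !inE /= !mem_primes pp N0 pN part_gt0 /=.
  done.
apply/negPn/negP => ncop.
set g := gcdn (a + d * k) N.
have g1 : (1 < g)%N.
  by rewrite ltn_neqAle eq_sym ncop /= gcdn_gt0 N0 orbT.
have pp := pdiv_prime g1.
have pg : (pdiv g %| g)%N := pdiv_dvd g.
have pA : (pdiv g %| a + d * k)%N := dvdn_trans pg (dvdn_gcdl _ _).
have pN : (pdiv g %| N)%N := dvdn_trans pg (dvdn_gcdr _ _).
have [pa|npa] := boolP (pdiv g %| a)%N.
  have : (pdiv g %| d * k)%N by rewrite -(dvdn_addr _ pa).
  rewrite Euclid_dvdM // Hk // pa orbF => pd.
  have : (pdiv g %| gcdn a d)%N by rewrite dvdn_gcd pa pd.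
  by rewrite (eqP cad) dvdn1 => /eqP p1; move: (prime_gt1 pp); rewrite p1.
have : (pdiv g %| d * k)%N by rewrite dvdn_mull // Hk.
by move=> pdk; move: pA; rewrite (dvdn_addl _ pdk) (negbTE npa).
Qed.

Lemma totient_card d : #|[pred a : 'I_d | coprime a d]| = totient d.
Proof.
rewrite totient_count_coprime big_mkord -sum1_card big_mkcond /=.
by apply: eq_big => // i _; rewrite inE /= coprime_sym; case: (coprime _ _).
Qed.

Lemma phi_sum (d : nat) (X : algC) :
  (totient d)%:R * X = \sum_(a < d | coprime a d) X.
Proof.
rewrite (eq_bigl (fun a : 'I_d => a \in [pred a : 'I_d | coprime a d])) //.
by rewrite sumr_const totient_card mulr_natl.
Qed.

Lemma sym_aux N d e : (0 < N)%N -> (d %| N)%N -> (e %| N)%N ->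
  (totient d)%:R * ramanujan e (N %/ d) =
  \sum_(a < d | coprime a d) \sum_(b < e | coprime b e)
     expi N ^+ ((a * (N %/ d)) * (b * (N %/ e))).
Proof.
move=> N0 dN eN.
have zp := @expi_prim N N0.
have zep := dvdn_prim_root zp eN.
have e0 : (0 < e)%N := dvdn_gt0 N0 eN.
rewrite phi_sum; apply: eq_bigr => a ca.
have [a' /andP [ma' ca'N]] := @lift_coprime d N a N0 ca.
rewrite (@ramanujan_prim _ _ (N %/ d) zep).
rewrite -(@rsum_unit _ e (N %/ d) a' e0 (prim_expr_order zep) (coprime_dvdr eN ca'N)).
rewrite /rsum; apply: eq_bigr => b cb.
set Nd := (N %/ d)%N.
have hN : N = (d * Nd)%N by rewrite mulnC divnK.
have E : ((a' * Nd) %% N = (a * Nd) %% N)%N.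
  by rewrite hN -!muln_modl (eqP ma').
rewrite -exprM.
have -> : ((N %/ e) * (b * (a' * Nd)) = (b * (N %/ e)) * (a' * Nd))%N by ring.
have -> : ((a * Nd) * (b * (N %/ e)) = (b * (N %/ e)) * (a * Nd))%N by ring.
have zK : (expi N ^+ (b * (N %/ e))) ^+ N = 1.
  by rewrite -exprM mulnC exprM (prim_expr_order zp) expr1n.
by rewrite [LHS]exprM [RHS]exprM -(@expr_modn _ N (a' * Nd) zK) E (@expr_modn _ N (a * Nd) zK).
Qed.


Lemma ram_sym N d e : (0 < N)%N -> (d %| N)%N -> (e %| N)%N ->
  (totient d)%:R * ramanujan e (N %/ d) = (totient e)%:R * ramanujan d (N %/ e).
Proof.
move=> N0 dN eN; rewrite !sym_aux // exchange_big /=.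
by apply: eq_bigr => b _; apply: eq_bigr => a _; rewrite mulnC.
Qed.

Lemma totient_neq0 d : (0 < d)%N -> (totient d)%:R != 0 :> algC.
Proof. by move=> d0; rewrite pnatr_eq0 -lt0n totient_gt0. Qed.

Lemma W_eq_S N fs j k : (0 < N)%N -> (nth 0 fs j %| N)%N -> (nth 0 fs k %| N)%N ->
  Wentry N fs j k = Sentry N fs j k.
Proof.
move=> N0 dj dk; rewrite /Wentry /Sentry ram_sym // mulrC mulKf //.
exact/totient_neq0/(dvdn_gt0 N0 dk).
Qed.

Lemma ram_mul d e x : (0 < d)%N -> (0 < e)%N -> coprime d e ->
  ramanujan (d * e) x = ramanujan d x * ramanujan e x.
Proof.
move=> d0 e0 cde; have de0 : (0 < d * e)%N by rewrite muln_gt0 d0.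
have zp := @expi_prim _ de0.
rewrite (@ramanujan_prim _ _ x zp) rsum_mul //.
have zdp := dvdn_prim_root zp (dvdn_mulr e (dvdnn d)).
have zep := dvdn_prim_root zp (dvdn_mull d (dvdnn e)).
rewrite mulKn // in zdp; rewrite mulnK // in zep.
by rewrite -(@ramanujan_prim _ _ x zdp) -(@ramanujan_prim _ _ x zep).
Qed.

Lemma ram_unit q x u : (0 < q)%N -> coprime u q ->
  ramanujan q (u * x) = ramanujan q x.
Proof.
move=> q0 cu; rewrite !ramanujanE //.
exact: rsum_unit q0 (prim_expr_order (@expi_prim _ q0)) cu.
Qed.

Lemma gcdnM_coprime x m n : coprime m n -> gcdn x (m * n) = (gcdn x m * gcdn x n)%N.
Proof.
move=> cmn; apply/eqP; rewrite eqn_dvd; apply/andP; split.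
  rewrite muln_gcdl dvdn_gcd; apply/andP; split.
    exact: dvdn_mulr (dvdn_gcdl _ _).
  rewrite [X in (_ %| X)%N]muln_gcdr dvdn_gcd dvdn_gcdr andbT.
  exact: dvdn_mull (dvdn_gcdl _ _).
have cg : coprime (gcdn x m) (gcdn x n).
  exact: coprime_dvdl (dvdn_gcdr _ _) (coprime_dvdr (dvdn_gcdr _ _) cmn).
rewrite dvdn_gcd Gauss_dvd // !dvdn_gcdl /=.
by rewrite dvdn_mul // dvdn_gcdr.
Qed.


Lemma nth_prod ds es i i' : (i < size ds)%N -> (i' < size es)%N ->
  nth 0%N (prod_ordering ds es) (sigma (size es) i i') = (nth 0 ds i * nth 0 es i')%N.
Proof.
rewrite /prod_ordering /sigma; elim: ds i => [|a ds IH] [|i] //= Hi Hi'.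
  by rewrite mul0n add0n nth_cat size_map Hi' (nth_map 0%N).
rewrite nth_cat size_map mulSn -addnA ltnNge leq_addr /= addKn; exact: IH.
Qed.

Lemma sigma_eq t j j' k k' : (j' < t)%N -> (k' < t)%N ->
  (sigma t j j' == sigma t k k') = (j == k) && (j' == k').
Proof.
move=> jt kt; apply/eqP/andP => [E|[/eqP -> /eqP ->]] //.
have t0 : (0 < t)%N by apply: leq_ltn_trans jt.
have := congr1 (divn^~ t) E; have := congr1 (modn^~ t) E.
rewrite /sigma !modnMDl !divnMDl // !modn_small // !divn_small // !addn0.
by move=> -> ->.
Qed.

Lemma ordering_dvd N ds i : (0 < N)%N -> divisor_ordering N ds ->
  (i < size ds)%N -> (nth 0 ds i %| N)%N.
Proof.
move=> N0 Hds Hi; rewrite dvdn_divisors // -(perm_mem Hds); exact: mem_nth.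
Qed.

Lemma prod_ordering_perm m n ds es : (0 < m)%N -> (0 < n)%N -> coprime m n ->
  divisor_ordering m ds -> divisor_ordering n es ->
  divisor_ordering (m * n) (prod_ordering ds es).
Proof.
move=> m0 n0 cmn Hds Hes; have mn0 : (0 < m * n)%N by rewrite muln_gt0 m0.
have Dd : forall d, d \in ds -> (d %| m)%N by move=> d; rewrite (perm_mem Hds) -dvdn_divisors.
have De : forall e, e \in es -> (e %| n)%N by move=> e; rewrite (perm_mem Hes) -dvdn_divisors.
apply: uniq_perm; last 2 first.
- exact: divisors_uniq.
- move=> x; rewrite -dvdn_divisors //; apply/idP/idP.
    by case/allpairsP => [[d e] /= [/Dd dm /De en ->]]; rewrite dvdn_mul.
  move=> xmn; have -> : x = (gcdn x m * gcdn x n)%N.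
    by rewrite -gcdnM_coprime //; apply/esym/gcdn_idPl.
  by apply: allpairs_f; [rewrite (perm_mem Hds) -dvdn_divisors ?dvdn_gcdr |
                         rewrite (perm_mem Hes) -dvdn_divisors ?dvdn_gcdr].
apply: allpairs_uniq; first by rewrite (perm_uniq Hds) divisors_uniq.
  by rewrite (perm_uniq Hes) divisors_uniq.
move=> [d e] [d' e'] /allpairsP [[a b] /= [/Dd am /De bn [-> ->]]].
move=> /allpairsP [[a' b'] /= [/Dd am' /De bn' [-> ->]]] /= E.
have ga : forall u v, (u %| m)%N -> (v %| n)%N -> gcdn m (u * v) = u.
  move=> u v um vn; rewrite Gauss_gcdl; first exact/gcdn_idPr.
  exact: coprime_dvdr vn cmn.
have gb : forall u v, (u %| m)%N -> (v %| n)%N -> gcdn n (u * v) = v.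
  move=> u v um vn; rewrite Gauss_gcdr; first exact/gcdn_idPr.
  by apply: coprime_dvdr um _; rewrite coprime_sym.
have -> : a = a' by rewrite -(ga a b am bn) E ga.
have -> : b = b' by rewrite -(gb a b am bn) E gb.
done.
Qed.


Definition cnt N A B Z := #|[set p : 'I_N * 'I_N |
  [&& gcdn p.1 N == A, gcdn p.2 N == B & (p.1 + p.2) %% N == Z %% N]%N]|.

Lemma card_bij_pred (T T' : finType) (f : T -> T') (P : pred T) (P' : pred T') :
  bijective f -> (forall x, P' (f x) = P x) ->
  #|[set x | P x]| = #|[set y | P' y]|.
Proof.
move=> bf H; rewrite -(card_imset _ (bij_inj bf)); apply: eq_card.
case: bf => g fg gf => y; rewrite inE; apply/imsetP/idP.
  by case=> x; rewrite inE => Px ->; rewrite H.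
by move=> Py; exists (g y); rewrite ?gf // inE -H gf.
Qed.

Lemma gcd_mul_unit x u N : coprime u N -> gcdn (x * u) N = gcdn x N.
Proof. by move=> cu; rewrite gcdnC Gauss_gcdl; [exact: gcdnC | rewrite coprime_sym]. Qed.

Lemma cnt_unit N A B Z u : (0 < N)%N -> coprime u N -> cnt N A B (u * Z) = cnt N A B Z.
Proof.
move=> N0 cu; rewrite /cnt.
pose f (x : 'I_N) : 'I_N := Ordinal (ltn_pmod (x * u) N0).
have finj : injective f.
  by move=> x y /(congr1 val) /= /eqP; rewrite modMr_coprime // => /ord_mod_inj.
pose g (p : 'I_N * 'I_N) := (f p.1, f p.2).
have ginj : injective g.
  move=> [x y] [x' y'] E; have := congr1 fst E; have := congr1 snd E.
  by move=> /= /finj -> /finj ->.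
apply/esym; apply: (@card_bij_pred _ _ g); first exact: injF_bij ginj.
move=> [x y] /=; rewrite !gcdn_modl !gcd_mul_unit //; congr [&& _, _ & _].
by rewrite modnDm -mulnDl (mulnC u) modMr_coprime.
Qed.

Lemma prod_dvd_eq m n G1 G2 A1 A2 : coprime m n ->
  (G1 %| m)%N -> (A1 %| m)%N -> (G2 %| n)%N -> (A2 %| n)%N ->
  (G1 * G2 == A1 * A2)%N = (G1 == A1) && (G2 == A2).
Proof.
move=> cmn g1 a1 g2 a2.
have ga : forall u v, (u %| m)%N -> (v %| n)%N -> gcdn m (u * v) = u.
  move=> u v um vn; rewrite Gauss_gcdl; first exact/gcdn_idPr.
  exact: coprime_dvdr vn cmn.
have gb : forall u v, (u %| m)%N -> (v %| n)%N -> gcdn n (u * v) = v.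
  move=> u v um vn; rewrite Gauss_gcdr; first exact/gcdn_idPr.
  by apply: coprime_dvdr um _; rewrite coprime_sym.
apply/eqP/andP => [E|[/eqP -> /eqP ->]] //; split; apply/eqP.
  by rewrite -(ga G1 G2) // E ga.
by rewrite -(gb G1 G2) // E gb.
Qed.

Lemma bool6 (a1 a2 b1 b2 c1 c2 : bool) :
  [&& a1 && a2, b1 && b2 & c1 && c2] = [&& a1, b1 & c1] && [&& a2, b2 & c2].
Proof. by case: a1; case: a2; case: b1; case: b2; case: c1; case: c2. Qed.

Lemma cnt_mul m n A1 A2 B1 B2 Z : (0 < m)%N -> (0 < n)%N -> coprime m n ->
  (A1 %| m)%N -> (A2 %| n)%N -> (B1 %| m)%N -> (B2 %| n)%N ->
  cnt (m * n) (A1 * A2) (B1 * B2) Z = (cnt m A1 B1 Z * cnt n A2 B2 Z)%N.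
Proof.
move=> m0 n0 cmn a1 a2 b1 b2; rewrite /cnt -cardsX.
pose fm (x : 'I_(m * n)) : 'I_m := Ordinal (ltn_pmod x m0).
pose fn (x : 'I_(m * n)) : 'I_n := Ordinal (ltn_pmod x n0).
pose g (p : 'I_(m * n) * 'I_(m * n)) := ((fm p.1, fm p.2), (fn p.1, fn p.2)).
have ginj : injective g.
  have h : forall x y : 'I_(m * n), fm x = fm y -> fn x = fn y -> x = y.
    move=> x y /(congr1 val) /= /eqP E1 /(congr1 val) /= /eqP E2.
    by apply: ord_mod_inj; rewrite chinese_remainder // E1 E2.
  move=> [x y] [x' y'] E.
  have := congr1 (fun q => q.1.1) E; have := congr1 (fun q => q.1.2) E.
  have := congr1 (fun q => q.2.1) E; have := congr1 (fun q => q.2.2) E.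
  by move=> /= e4 e3 e2 e1; rewrite (h x x') // (h y y').
have gbij : bijective g.
  by apply: inj_card_bij ginj _; rewrite !card_prod !card_ord -!mulnA (mulnCA n m n).
pose Pm (p : 'I_m * 'I_m) := [&& gcdn p.1 m == A1, gcdn p.2 m == B1 & (p.1 + p.2) %% m == Z %% m]%N.
pose Pn (p : 'I_n * 'I_n) := [&& gcdn p.1 n == A2, gcdn p.2 n == B2 & (p.1 + p.2) %% n == Z %% n]%N.
rewrite (@card_bij_pred _ _ g _ (fun q => Pm q.1 && Pn q.2) gbij); last first.
  move=> [x y]; rewrite /Pm /Pn /=.
  rewrite !gcdn_modl !gcdnM_coprime //.
  rewrite (@prod_dvd_eq m n) ?dvdn_gcdr // (@prod_dvd_eq m n) ?dvdn_gcdr //.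
  by rewrite !modnDm chinese_remainder // -bool6.
apply: eq_card => [[[x1 y1] [x2 y2]]].
by rewrite !inE.
Qed.


Lemma divmul m n d e : (d %| m)%N -> (e %| n)%N -> (0 < d)%N -> (0 < e)%N ->
  ((m * n) %/ (d * e) = (m %/ d) * (n %/ e))%N.
Proof.
move=> dm en d0 e0.
have -> : (m * n = (d * e) * ((m %/ d) * (n %/ e)))%N.
  by rewrite -{1}(divnK dm) -{1}(divnK en); ring.
by rewrite mulKn // muln_gt0 d0.
Qed.

Lemma Wmul m n ds es j k j' k' : (0 < m)%N -> (0 < n)%N -> coprime m n ->
  divisor_ordering m ds -> divisor_ordering n es ->
  (j < size ds)%N -> (k < size ds)%N -> (j' < size es)%N -> (k' < size es)%N ->
  Wentry (m * n) (prod_ordering ds es) (sigma (size es) j j') (sigma (size es) k k')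
  = Wentry m ds j k * Wentry n es j' k'.
Proof.
move=> m0 n0 cmn Hds Hes Hj Hk Hj' Hk'.
rewrite /Wentry !nth_prod //.
have djm := @ordering_dvd _ _ _ m0 Hds Hj; have dkm := @ordering_dvd _ _ _ m0 Hds Hk.
have ejn := @ordering_dvd _ _ _ n0 Hes Hj'; have ekn := @ordering_dvd _ _ _ n0 Hes Hk'.
move: djm dkm ejn ekn.
set dj := nth 0%N ds j; set dk := nth 0%N ds k; set ej := nth 0%N es j'; set ek := nth 0%N es k'.
move=> djm dkm ejn ekn.
have dj0 := dvdn_gt0 m0 djm; have dk0 := dvdn_gt0 m0 dkm.
have ej0 := dvdn_gt0 n0 ejn; have ek0 := dvdn_gt0 n0 ekn.
have cjj : coprime dj ej by apply: coprime_dvdl djm (coprime_dvdr ejn cmn).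
have ckk : coprime dk ek by apply: coprime_dvdl dkm (coprime_dvdr ekn cmn).
rewrite divmul // !totient_coprime // ram_mul //.
have c1 : coprime (n %/ ej) dk.
  apply: coprime_dvdl (dvdn_div ejn) _; apply: coprime_dvdr dkm _; by rewrite coprime_sym.
have c2 : coprime (m %/ dj) ek.
  apply: coprime_dvdl (dvdn_div djm) _; exact: coprime_dvdr ekn cmn.
rewrite (@ram_unit ek (n %/ ej)%N (m %/ dj)%N ek0 c2).
rewrite (mulnC (m %/ dj)%N) (@ram_unit dk (m %/ dj)%N (n %/ ej)%N dk0 c1).
rewrite !natrM invfM; ring.
Qed.

Lemma Mcnt N ds i j k :
  Mentry N ds i j k = cnt N (N %/ nth 0 ds i)%N (N %/ nth 0 ds j)%N (N %/ nth 0 ds k)%N.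
Proof. by []. Qed.

Theorem mainTheorem6 (m n : nat) (ds es : seq nat) :
  (0 < m)%N -> (0 < n)%N -> coprime m n ->
  divisor_ordering m ds -> divisor_ordering n es ->
  let fs := prod_ordering ds es in
  (forall i j k i' j' k' : nat,
     (i < tau m)%N -> (j < tau m)%N -> (k < tau m)%N ->
     (i' < tau n)%N -> (j' < tau n)%N -> (k' < tau n)%N ->
     [/\ Mentry (m * n) fs (sigma (tau n) i i') (sigma (tau n) j j') (sigma (tau n) k k')
           = (Mentry m ds i j k * Mentry n es i' j' k')%N,
         Dentry (m * n) fs (sigma (tau n) i i') (sigma (tau n) j j') (sigma (tau n) k k')
           = Dentry m ds i j k * Dentry n es i' j' k' &
         Wentry (m * n) fs (sigma (tau n) j j') (sigma (tau n) k k')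
           = Wentry m ds j k * Wentry n es j' k']) /\
  (forall j k : nat, (j < tau (m * n))%N -> (k < tau (m * n))%N ->
     Wentry (m * n) fs j k = Sentry (m * n) fs j k).
Proof.
move=> m0 n0 cmn Hds Hes fs.
have sds : size ds = tau m := perm_size Hds.
have ses : size es = tau n := perm_size Hes.
have mn0 : (0 < m * n)%N by rewrite muln_gt0 m0.
have Hfs := @prod_ordering_perm _ _ _ _ m0 n0 cmn Hds Hes.
split; last first.
  move=> j k Hj Hk; apply: W_eq_S => //; apply: (@ordering_dvd _ _ _ mn0 Hfs);
  by rewrite (perm_size Hfs).
move=> i j k i' j' k'; rewrite -sds -ses => Hi Hj Hk Hi' Hj' Hk'.
split.
- rewrite !Mcnt !nth_prod //.
  have dim := @ordering_dvd _ _ _ m0 Hds Hi.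
  have djm := @ordering_dvd _ _ _ m0 Hds Hj.
  have dkm := @ordering_dvd _ _ _ m0 Hds Hk.
  have ein := @ordering_dvd _ _ _ n0 Hes Hi'.
  have ejn := @ordering_dvd _ _ _ n0 Hes Hj'.
  have ekn := @ordering_dvd _ _ _ n0 Hes Hk'.
  have := dvdn_gt0 m0 dim; have := dvdn_gt0 m0 djm; have := dvdn_gt0 m0 dkm.
  have := dvdn_gt0 n0 ein; have := dvdn_gt0 n0 ejn; have := dvdn_gt0 n0 ekn.
  move=> p1 p2 p3 p4 p5 p6.
  rewrite !divmul //.
  rewrite cnt_mul ?dvdn_div //.
  congr (_ * _)%N.
    rewrite (mulnC (m %/ _)%N) cnt_unit //.
    apply: coprime_dvdl (dvdn_div ekn) _; by rewrite coprime_sym.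
  rewrite cnt_unit //; exact: coprime_dvdl (dvdn_div dkm) cmn.
- rewrite /Dentry sigma_eq //.
  case: (eqVneq j k) => [ejk|njk]; case: (eqVneq j' k') => [ejk'|njk'];
    rewrite /= ?mul0r ?mulr0 //.
  subst k k'.
  exact: (@Wmul m n ds es i j i' j' m0 n0 cmn Hds Hes Hi Hj Hi' Hj').
- exact: (@Wmul m n ds es j k j' k' m0 n0 cmn Hds Hes Hj Hk Hj' Hk').
Qed.
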